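(* Let $A$ be an evolution algebra over a commutative ring $R$ with finite basis $x_1,\dots,x_N$ and structure coefficient matrix $C=(c_{ki})_{N\times N}$. For $\alpha=(a_1,\dots,a_N)\in R^N$ let $C_\alpha=(a_jc_{kj})_{k,j}$ (the $j$-th column of $C$ multiplied by $a_j$). Then $A$ is nil if and only if for every $\alpha\in R^N$ there exists a positive integer $k_\alpha$ such that $C_\alpha^{k_\alpha}\alpha^T=0$.
   Context: An evolution algebra over a commutative ring $R$ is a free $R$-module $A$ with basis $\{x_i\}$ equipped with the $R$-bilinear multiplication determined by $x_ix_j=0$ for $i\ne j$ and $x_i^2=\sum_k c_{ki}x_k$ with $c_{ki}\in R$. The structure coefficient matrix $C$ has $(k,i)$ entry $c_{ki}$. Principal powers: $a^1=a$, $a^n=a^{n-1}a$. $A$ is nil if for every $a\in A$ there is $n\in\mathbb{N}$ with $a^n=0$. *)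

(* Defs.v *)
From HB Require Import structures.
From mathcomp Require Import all_boot all_order all_algebra.
Set Implicit Arguments. Unset Strict Implicit. Unset Printing Implicit Defensive.
Import GRing.Theory.
Local Open Scope ring_scope.

(* Evolution algebra over R with basis x_0..x_(N-1): elements are coordinate
   column vectors; structure matrix C with C k i = c_{ki}, x_i^2 = sum_k c_{ki} x_k,
   x_i x_j = 0 for i <> j. *)
Definition evo_mul (R : comPzRingType) (N : nat) (C : 'M[R]_N) (a b : 'cV[R]_N)
  : 'cV[R]_N := \col_k \sum_(i < N) a i 0 * b i 0 * C k i.

(* evo_ppow_aux C a n = a^(n+1) (principal power): a^1 = a, a^(m+1) = a^m a. *)
Fixpoint evo_ppow_aux (R : comPzRingType) (N : nat) (C : 'M[R]_N) (a : 'cV[R]_N)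
  (n : nat) : 'cV[R]_N :=
  match n with
  | O => a
  | S m => evo_mul C (evo_ppow_aux C a m) a
  end.

Definition evo_ppow (R : comPzRingType) (N : nat) (C : 'M[R]_N) (a : 'cV[R]_N)
  (n : nat) : 'cV[R]_N := evo_ppow_aux C a n.-1.

Definition evo_nil (R : comPzRingType) (N : nat) (C : 'M[R]_N) : Prop :=
  forall a : 'cV[R]_N, exists n : nat, (0 < n)%N /\ evo_ppow C a n = 0.

Definition C_alpha (R : comPzRingType) (N : nat) (C : 'M[R]_N) (alpha : 'cV[R]_N)
  : 'M[R]_N := \matrix_(k, j) (alpha j 0 * C k j).

(* Main.v *)
Require Import Defs.
From HB Require Import structures.
From mathcomp Require Import all_boot all_order all_algebra.
Local Open Scope ring_scope.
Import GRing.Theory.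

Lemma evo_mul_C (R : comPzRingType) (N : nat) (C : 'M[R]_N) (a b : 'cV[R]_N) :
  evo_mul C b a = C_alpha C a *m b.
Proof.
apply/matrixP => k j; rewrite (ord1 j) !mxE.
apply: eq_bigr => i _; rewrite !mxE.
by rewrite [RHS]mulrC mulrA.
Qed.

Lemma ppow_C (R : comPzRingType) (N : nat) (C : 'M[R]_N) (a : 'cV[R]_N) n :
  evo_ppow_aux C a n = C_alpha C a ^+ n *m a.
Proof.
elim: n => [|n IH] /=; first by rewrite expr0 mul1mx.
have E : C_alpha C a ^+ n.+1 = C_alpha C a *m C_alpha C a ^+ n by rewrite exprS mulmxE.
by rewrite evo_mul_C IH E mulmxA.
Qed.

Theorem theorem2p5 (R : comPzRingType) (N : nat) (C : 'M[R]_N) :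
  evo_nil C <->
  (forall alpha : 'cV[R]_N, exists k : nat, (0 < k)%N /\ (C_alpha C alpha) ^+ k *m alpha = 0).
Proof.
split.
- move=> H a; have [n [n0 Hn]] := H a.
  exists n; split => //.
  move: Hn; rewrite /evo_ppow ppow_C.
  case: n n0 => // n _ /= Hn.
  have E : C_alpha C a ^+ n.+1 = C_alpha C a *m C_alpha C a ^+ n by rewrite exprS mulmxE.
by rewrite E -mulmxA Hn mulmx0.
- move=> H a; have [k [k0 Hk]] := H a.
  exists k.+1; split => //.
  by rewrite /evo_ppow ppow_C.
Qed.
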